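(* Let $\mathcal{A}$ be a pca with a partial numbering $\gamma : \omega \to \mathcal{A}$ and let $X = \{ \langle n, m, k\rangle \mid n, m, k \in \omega,\ \gamma(n) \cdot \gamma(m) = \gamma(k) \}$. Then $\mathcal{A}$ is embeddable in $\mathcal{G}^X$ and hence in $\mathcal{G}$.
   Context: A pca is a set with a partial binary application operation containing distinct $\mathrm{s},\mathrm{k}$ with $\mathrm{k}ab\downarrow=a$, $\mathrm{s}ab\downarrow$, $\mathrm{s}abc\simeq(ac)(bc)$. An embedding of pcas is an injective map $f$ with: if $ab$ is defined then $f(a)f(b)$ is defined and equals $f(ab)$. A partial numbering of $\mathcal{A}$ is a surjective partial function $\gamma:\omega\rightharpoonup\mathcal{A}$. $\mathcal{G}$ is $\mathcal{P}(\omega)$ with application $A\cdot B=\{n:\exists u\,(\langle n,u\rangle\in A\wedge D_u\subseteq B)\}$, where $\langle\cdot,\cdot\rangle$ is a bijective computable pairing with $\langle 0,0\rangle=0$ (extended to triples in the standard way) and $D_u$ is the finite set with canonical code $u$. $\mathcal{G}^X$ is the least class containing $X$ and all c.e. sets and closed under this application (equivalently, all sets enumeration-reducible to $X$). *)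

(* Defs.v *)
From Stdlib Require Import Arith List.
Import ListNotations.

Definition oapp {A : Type} (app : A -> A -> option A)
  (x y : option A) : option A :=
  match x, y with
  | Some a, Some b => app a b
  | _, _ => None
  end.

(* A pca: a set with a partial binary application containing distinct s, k
   with  k a b ↓ = a,  s a b ↓,  s a b c ≃ (a c)(b c)  (Kleene equality,
   expressed as equality in option A). *)
Definition is_pca (A : Type) (app : A -> A -> option A) : Prop :=
  exists s k : A, s <> k /\
    (forall a b, oapp app (app k a) (Some b) = Some a) /\
    (forall a b, oapp app (app s a) (Some b) <> None) /\
    (forall a b c,
        oapp app (oapp app (app s a) (Some b)) (Some c)
        = oapp app (app a c) (app b c)).

Definition partial_numbering {A : Type} (gamma : nat -> option A) : Prop :=
  forall a : A, exists n, gamma n = Some a.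

Definition pair (n m : nat) : nat := (n + m) * (n + m + 1) / 2 + m.
Definition triple (n m k : nat) : nat := pair n (pair m k).

Definition D (u x : nat) : Prop := Nat.testbit u x = true.

Definition set_eq (P Q : nat -> Prop) : Prop := forall n, P n <-> Q n.

Definition Gapp (P Q : nat -> Prop) : nat -> Prop :=
  fun n => exists u, P (pair n u) /\ (forall x, D u x -> Q x).

Inductive code : Type :=
| CZero : code
| CSucc : code
| CProj : nat -> code
| CComp : code -> list code -> code
| CRec : code -> code -> code
| CMu : code -> code.

Inductive eval : code -> list nat -> nat -> Prop :=
| ev_zero : forall v, eval CZero v 0
| ev_succ : forall x v, eval CSucc (x :: v) (S x)
| ev_proj : forall i v, i < length v -> eval (CProj i) v (nth i v 0)
| ev_comp : forall f gs v ys y,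
    evals gs v ys -> eval f ys y -> eval (CComp f gs) v y
| ev_rec0 : forall f g v y, eval f v y -> eval (CRec f g) (0 :: v) y
| ev_recS : forall f g n v z y,
    eval (CRec f g) (n :: v) z -> eval g (n :: z :: v) y ->
    eval (CRec f g) (S n :: v) y
| ev_mu : forall f v n,
    eval f (n :: v) 0 ->
    (forall m, m < n -> exists k, eval f (m :: v) (S k)) ->
    eval (CMu f) v n
with evals : list code -> list nat -> list nat -> Prop :=
| evs_nil : forall v, evals [] v []
| evs_cons : forall g gs v y ys,
    eval g v y -> evals gs v ys -> evals (g :: gs) v (y :: ys).

Definition ce (P : nat -> Prop) : Prop :=
  exists c : code, forall n, P n <-> exists y, eval c [n] y.

Inductive GX (X : nat -> Prop) : (nat -> Prop) -> Prop :=
| GX_X : forall P, set_eq P X -> GX X P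
| GX_ce : forall P, ce P -> GX X P
| GX_app : forall P Q R, GX X P -> GX X Q -> set_eq R (Gapp P Q) -> GX X R.

Definition G_embedding {A : Type} (app : A -> A -> option A)
  (f : A -> nat -> Prop) : Prop :=
  (forall a b, set_eq (f a) (f b) -> a = b) /\
  (forall a b c, app a b = Some c -> set_eq (Gapp (f a) (f b)) (f c)).

(* Main.v *)
Require Import Defs.
From Stdlib Require Import Arith List Lia Classical.
Import ListNotations.

Inductive ex : Type :=
| V : nat -> ex
| Zr : ex
| Sc : ex -> ex
| Rc : ex -> ex -> ex -> ex
| Ap : ex -> exs -> ex
with exs : Type := | Nl : exs | Cs : ex -> exs -> exs.

Scheme ex_ind2 := Induction for ex Sort Prop
with exs_ind2 := Induction for exs Sort Prop.

Fixpoint den (env : list nat) (e : ex) : nat :=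
 match e with
 | V i => nth i env 0
 | Zr => 0
 | Sc e => S (den env e)
 | Rc m b s => nat_rect (fun _ => nat) (den env b) (fun i acc => den (i :: acc :: env) s) (den env m)
 | Ap f es => den (dens env es) f
 end
with dens (env : list nat) (es : exs) : list nat :=
 match es with Nl => [] | Cs e es => den env e :: dens env es end.

Fixpoint lens (es : exs) : nat := match es with Nl => 0 | Cs _ es => S (lens es) end.

Definition projs (n : nat) : list code := map CProj (seq 0 n).

Fixpoint cp (n : nat) (e : ex) : code :=
 match e with
 | V i => if i <? n then CProj i else CZero
 | Zr => CZero
 | Sc e => CComp CSucc [cp n e]
 | Rc m b s => CComp (CRec (cp n b) (cp (S (S n)) s)) (cp n m :: projs n)
 | Ap f es => CComp (cp (lens es) f) (cps n es)
 end
with cps (n : nat) (es : exs) : list code :=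
 match es with Nl => [] | Cs e es => cp n e :: cps n es end.

Lemma dens_len env es : length (dens env es) = lens es.
Proof. induction es; simpl; auto. Qed.

Lemma evals_projs_gen : forall j k env, k + j = length env ->
  evals (map CProj (seq k j)) env (skipn k env).
Proof.
  induction j; intros k env H; simpl.
  - rewrite skipn_all2 by lia. constructor.
  - assert (Hk : k < length env) by lia.
    replace (skipn k env) with (nth k env 0 :: skipn (S k) env).
    + constructor. constructor; auto. apply IHj; lia.
    + clear -Hk. revert k Hk. induction env; intros k Hk; simpl in *. lia.
      destruct k; simpl; auto. apply IHenv; lia.
Qed.

Lemma evals_projs env : evals (projs (length env)) env env.
Proof. unfold projs. pose proof (evals_projs_gen (length env) 0 env). simpl in H. auto. Qed.

Lemma cp_correct : forall e n env, length env = n -> eval (cp n e) env (den env e).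
Proof.
  apply (ex_ind2 (fun e => forall n env, length env = n -> eval (cp n e) env (den env e))
                 (fun es => forall n env, length env = n -> evals (cps n es) env (dens env es))).
  - intros i n env H; simpl. destruct (Nat.ltb_spec i n).
    + constructor; lia.
    + rewrite nth_overflow by lia. constructor.
  - intros; simpl; constructor.
  - intros e IH n env H; simpl. econstructor. constructor. apply IH; auto. constructor. constructor.
  - intros m IHm b IHb s IHs n env H; simpl. econstructor.
    + constructor. apply IHm; auto. subst n. apply evals_projs.
    + generalize (den env m). intro d. induction d; simpl.
      * constructor. apply IHb; auto.
      * econstructor. apply IHd. apply IHs. simpl; lia.
  - intros f IHf es IHes n env H; simpl. econstructor. apply IHes; auto. apply IHf. apply dens_len.
  - intros; simpl; constructor.
  - intros e IHe es IHes n env H; simpl. constructor; auto.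
Qed.

Lemma evals_projs_det : forall env ys, evals (projs (length env)) env ys -> ys = env.
Proof.
  intros env ys H. unfold projs in H.
  assert (G : forall j k ys, k + j = length env -> evals (map CProj (seq k j)) env ys -> ys = skipn k env).
  { induction j; intros k ys' Hk Hev; simpl in Hev; inversion Hev; subst.
    - rewrite skipn_all2 by lia. auto.
    - match goal with Hp : eval (CProj _) _ _ |- _ => inversion Hp; subst end.
      match goal with Hq : evals (map CProj _) _ _ |- _ => erewrite (IHj (S k) _ ltac:(lia) Hq) end.
      assert (Hk' : k < length env) by lia. clear -Hk'. revert k Hk'. induction env; intros k Hk; simpl in *. lia.
      destruct k; simpl; auto. apply IHenv; lia. }
  apply (G (length env) 0); auto.
Qed.

Lemma cp_det : forall e n env y, length env = n -> eval (cp n e) env y -> y = den env e.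
Proof.
  apply (ex_ind2 (fun e => forall n env y, length env = n -> eval (cp n e) env y -> y = den env e)
                 (fun es => forall n env ys, length env = n -> evals (cps n es) env ys -> ys = dens env es)).
  - intros i n env y H Hev; simpl in *. destruct (Nat.ltb_spec i n).
    + inversion Hev; subst; auto.
    + inversion Hev; subst. rewrite nth_overflow by lia. auto.
  - intros n env y H Hev; simpl in *; inversion Hev; auto.
  - intros e IH n env y H Hev; simpl in *. inversion Hev; subst.
    match goal with Hq : evals _ _ _ |- _ => inversion Hq; subst end.
    match goal with Hq : evals [] _ _ |- _ => inversion Hq; subst end.
    match goal with Hq : eval CSucc _ _ |- _ => inversion Hq; subst end.
    f_equal. eapply IH; eauto.
  - intros m IHm b IHb s IHs n env y H Hev; simpl in *. inversion Hev; subst.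
    match goal with Hq : evals _ _ _ |- _ => inversion Hq; subst end.
    match goal with Hq : evals (projs _) _ _ |- _ => apply evals_projs_det in Hq; subst end.
    match goal with Hq : eval (cp _ m) _ _ |- _ => apply (IHm _ _ _ eq_refl) in Hq; subst end.
    clear Hev H2. revert y H5. generalize (den env m) as d. induction d; intros y Hr; inversion Hr; subst; simpl.
    + eapply IHb; eauto.
    + match goal with Hq : eval (CRec _ _) _ _ |- _ => apply IHd in Hq; subst end. eapply IHs; eauto.
  - intros f IHf es IHes n env y H Hev; simpl in *. inversion Hev; subst.
    match goal with Hq : evals _ _ _ |- _ => apply (IHes _ _ _ eq_refl) in Hq; subst end. eapply IHf; [|eassumption]. apply dens_len.
  - intros n env ys H Hev; simpl in *; inversion Hev; auto.
  - intros e IHe es IHes n env ys H Hev; simpl in *; inversion Hev; subst. f_equal; eauto.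
Qed.

Lemma ex_least (P : nat -> Prop) n : P n -> exists m, P m /\ forall k, k < m -> ~ P k.
Proof.
  induction n as [n IH] using lt_wf_ind. intro Hn.
  destruct (classic (exists k, k < n /\ P k)) as [[k [Hk Pk]]|Hno].
  - apply (IH k Hk Pk).
  - exists n. split; auto. intros k Hk Pk. apply Hno; eauto.
Qed.

Lemma ce_mu h : ce (fun t => exists z, den [z; t] h = 0).
Proof.
  exists (CMu (cp 2 h)). intro t; split.
  - intros [z Hz]. destruct (ex_least (fun z => den [z; t] h = 0) z Hz) as [m [Hm Hmin]].
    exists m. constructor.
    + pose proof (cp_correct h 2 [m; t] eq_refl) as C. rewrite Hm in C. exact C.
    + intros k Hk. destruct (den [k; t] h) eqn:E.
      * exfalso; eapply Hmin; eauto.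
      * exists n. pose proof (cp_correct h 2 [k; t] eq_refl) as C. rewrite E in C. exact C.
  - intros [y Hy]. inversion Hy; subst. exists y. symmetry. eapply cp_det; [|eassumption]. reflexivity.
Qed.

Definition ap1 f a := Ap f (Cs a Nl).
Definition ap2 f a b := Ap f (Cs a (Cs b Nl)).
Definition ap3 f a b c := Ap f (Cs a (Cs b (Cs c Nl))).
Lemma den_ap1 env f a : den env (ap1 f a) = den [den env a] f. Proof. reflexivity. Qed.
Lemma den_ap2 env f a b : den env (ap2 f a b) = den [den env a; den env b] f. Proof. reflexivity. Qed.
Lemma den_ap3 env f a b c : den env (ap3 f a b c) = den [den env a; den env b; den env c] f. Proof. reflexivity. Qed.

Lemma den_Rc_ext env m b s (base : nat) (G : nat -> nat -> nat) :
  den env b = base -> (forall i acc, den (i :: acc :: env) s = G i acc) ->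
  den env (Rc m b s) = nat_rect (fun _ => nat) base G (den env m).
Proof.
  intros Hb Hs. simpl. generalize (den env m) as d. induction d; simpl; congruence.
Qed.

Ltac dsimp := repeat (rewrite ?den_ap1, ?den_ap2, ?den_ap3); cbn [den dens nth].

Definition addT := Rc (V 1) (V 0) (Sc (V 1)).
Lemma addT_ok x y : den [x; y] addT = x + y.
Proof.
  unfold addT. rewrite (den_Rc_ext _ _ _ _ x (fun _ acc => S acc)) by reflexivity.
  cbn [den nth]. induction y; simpl; lia.
Qed.

Definition predT := Rc (V 0) Zr (V 0).
Lemma predT_ok x : den [x] predT = pred x.
Proof.
  unfold predT. rewrite (den_Rc_ext _ _ _ _ 0 (fun i _ => i)) by reflexivity.
  cbn [den nth]. destruct x; reflexivity.
Qed.

Definition subT := Rc (V 1) (V 0) (ap1 predT (V 1)).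
Lemma subT_ok x y : den [x; y] subT = x - y.
Proof.
  unfold subT. rewrite (den_Rc_ext _ _ _ _ x (fun _ acc => pred acc)).
  2: reflexivity. 2: intros; dsimp; apply predT_ok.
  cbn [den nth]. induction y; simpl; [lia|]. rewrite IHy. lia.
Qed.

Definition iszT := Rc (V 0) (Sc Zr) Zr.
Lemma iszT_ok x : den [x] iszT = Nat.b2n (x =? 0).
Proof.
  unfold iszT. rewrite (den_Rc_ext _ _ _ _ 1 (fun _ _ => 0)) by reflexivity.
  cbn [den nth]. destruct x; reflexivity.
Qed.

Definition sgT := Rc (V 0) Zr (Sc Zr).
Lemma sgT_ok x : den [x] sgT = if x =? 0 then 0 else 1.
Proof.
  unfold sgT. rewrite (den_Rc_ext _ _ _ _ 0 (fun _ _ => 1)) by reflexivity.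
  cbn [den nth]. destruct x; reflexivity.
Qed.

Definition neqT := ap1 sgT (ap2 addT (ap2 subT (V 0) (V 1)) (ap2 subT (V 1) (V 0))).
Lemma neqT_ok x y : den [x; y] neqT = if x =? y then 0 else 1.
Proof.
  unfold neqT. dsimp. rewrite !subT_ok, addT_ok, sgT_ok.
  destruct (Nat.eqb_spec (x - y + (y - x)) 0); destruct (Nat.eqb_spec x y); lia.
Qed.

Definition eqT := ap1 iszT (ap2 neqT (V 0) (V 1)).
Lemma eqT_ok x y : den [x; y] eqT = Nat.b2n (x =? y).
Proof.
  unfold eqT. dsimp. rewrite neqT_ok, iszT_ok. destruct (x =? y); reflexivity.
Qed.

Fixpoint Tf (s : nat) : nat := match s with 0 => 0 | S s' => Tf s' + S s' end.

Definition TT := Rc (V 0) Zr (ap2 addT (V 1) (Sc (V 0))).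
Lemma TT_ok s : den [s] TT = Tf s.
Proof.
  unfold TT. rewrite (den_Rc_ext _ _ _ _ 0 (fun i acc => acc + S i)).
  2: reflexivity. 2: intros; dsimp; apply addT_ok.
  cbn [den nth]. induction s; simpl; auto.
Qed.

Lemma Tf_div s : Tf s = s * (s + 1) / 2.
Proof.
  induction s; simpl Tf; auto.
  replace (S s * (S s + 1)) with (s * (s + 1) + (S s) * 2) by lia.
  rewrite Nat.div_add by lia. lia.
Qed.

Lemma pair_Tf n m : pair n m = Tf (n + m) + m.
Proof. unfold pair. rewrite Tf_div. reflexivity. Qed.

Definition pairT := ap2 addT (ap1 TT (ap2 addT (V 0) (V 1))) (V 1).
Lemma pairT_ok x y : den [x; y] pairT = pair x y.
Proof. unfold pairT. dsimp. rewrite !addT_ok, TT_ok, pair_Tf. reflexivity. Qed.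

Lemma Tf_mono s s' : s <= s' -> Tf s <= Tf s'.
Proof. induction 1; simpl; lia. Qed.

Lemma Tf_lt s s' : s < s' -> Tf s + s < Tf s'.
Proof. intro H. pose proof (Tf_mono (S s) s' H). simpl in H0. lia. Qed.

Lemma pair_inj n m n' m' : pair n m = pair n' m' -> n = n' /\ m = m'.
Proof.
  rewrite !pair_Tf. intro H.
  destruct (lt_eq_lt_dec (n + m) (n' + m')) as [[Hl|He]|Hl].
  - pose proof (Tf_lt _ _ Hl). lia.
  - rewrite He in H. lia.
  - pose proof (Tf_lt _ _ Hl). lia.
Qed.

Lemma pair_ge_r n m : m <= pair n m.
Proof. rewrite pair_Tf. lia. Qed.
Lemma pair_ge_l n m : n <= pair n m.
Proof. rewrite pair_Tf. destruct (n + m) eqn:E; simpl; lia. Qed.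

Fixpoint cs (p : nat) : nat :=
  match p with 0 => 0 | S p' => cs p' + Nat.b2n (S p' =? Tf (S (cs p'))) end.

Definition csT := Rc (V 0) Zr (ap2 addT (V 1) (ap2 eqT (Sc (V 0)) (ap1 TT (Sc (V 1))))).
Lemma csT_ok p : den [p] csT = cs p.
Proof.
  unfold csT. rewrite (den_Rc_ext _ _ _ _ 0 (fun i acc => acc + Nat.b2n (S i =? Tf (S acc)))).
  2: reflexivity. 2: intros; dsimp; rewrite TT_ok, eqT_ok, addT_ok; reflexivity.
  cbn [den nth]. induction p; simpl; auto.
Qed.

Lemma cs_inv p : Tf (cs p) <= p < Tf (S (cs p)).
Proof.
  induction p; [simpl; lia|]. cbn [cs].
  destruct (Nat.eqb_spec (S p) (Tf (S (cs p)))) as [E|E]; simpl Nat.b2n.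
  - rewrite Nat.add_1_r. simpl Tf in *. lia.
  - rewrite Nat.add_0_r. simpl Tf in *. lia.
Qed.

Lemma cs_unique p s : Tf s <= p < Tf (S s) -> cs p = s.
Proof.
  intro H. pose proof (cs_inv p).
  destruct (lt_eq_lt_dec (cs p) s) as [[Hl|He]|Hl]; auto.
  - pose proof (Tf_mono (S (cs p)) s Hl). lia.
  - pose proof (Tf_mono (S s) (cs p) Hl). lia.
Qed.

Definition csnd p := p - Tf (cs p).
Definition cfst p := cs p - csnd p.

Lemma cs_pair x y : cs (pair x y) = x + y.
Proof. apply cs_unique. rewrite pair_Tf. simpl. lia. Qed.
Lemma csnd_pair x y : csnd (pair x y) = y.
Proof. unfold csnd. rewrite cs_pair. rewrite pair_Tf. lia. Qed.
Lemma cfst_pair x y : cfst (pair x y) = x.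
Proof. unfold cfst. rewrite csnd_pair, cs_pair. lia. Qed.
Lemma pair_surj p : pair (cfst p) (csnd p) = p.
Proof.
  pose proof (cs_inv p). simpl in H. unfold cfst, csnd.
  rewrite pair_Tf. replace (cs p - (p - Tf (cs p)) + (p - Tf (cs p))) with (cs p) by lia. lia.
Qed.

Definition csndT := ap2 subT (V 0) (ap1 TT (ap1 csT (V 0))).
Lemma csndT_ok p : den [p] csndT = csnd p.
Proof. unfold csndT. dsimp. rewrite csT_ok, TT_ok, subT_ok. reflexivity. Qed.
Definition cfstT := ap2 subT (ap1 csT (V 0)) (ap1 csndT (V 0)).
Lemma cfstT_ok p : den [p] cfstT = cfst p.
Proof. unfold cfstT. dsimp. rewrite csT_ok, csndT_ok, subT_ok. reflexivity. Qed.

Definition pow2T := Rc (V 0) (Sc Zr) (ap2 addT (V 1) (V 1)).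
Lemma pow2T_ok x : den [x] pow2T = 2 ^ x.
Proof.
  unfold pow2T. rewrite (den_Rc_ext _ _ _ _ 1 (fun _ acc => acc + acc)).
  2: reflexivity. 2: intros; dsimp; apply addT_ok.
  cbn [den nth]. induction x; simpl; auto. rewrite IHx. lia.
Qed.

Definition parT := Rc (V 0) Zr (ap1 iszT (V 1)).
Lemma parT_ok x : den [x] parT = Nat.b2n (Nat.odd x).
Proof.
  unfold parT. rewrite (den_Rc_ext _ _ _ _ 0 (fun _ acc => Nat.b2n (acc =? 0))).
  2: reflexivity. 2: intros; dsimp; apply iszT_ok.
  cbn [den nth]. induction x; simpl; auto. rewrite IHx.
  rewrite Nat.odd_succ, <- Nat.negb_odd. destruct (Nat.odd x); reflexivity.
Qed.

Lemma div2_S n : Nat.div2 (S n) = Nat.div2 n + Nat.b2n (Nat.odd n).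
Proof.
  pose proof (Nat.div2_odd n) as H1. pose proof (Nat.div2_odd (S n)) as H2.
  rewrite Nat.odd_succ, <- Nat.negb_odd in H2.
  destruct (Nat.odd n); simpl in *; lia.
Qed.

Definition div2T := Rc (V 0) Zr (ap2 addT (V 1) (ap1 parT (V 0))).
Lemma div2T_ok x : den [x] div2T = Nat.div2 x.
Proof.
  unfold div2T. rewrite (den_Rc_ext _ _ _ _ 0 (fun i acc => acc + Nat.b2n (Nat.odd i))).
  2: reflexivity. 2: intros; dsimp; rewrite parT_ok; apply addT_ok.
  cbn [den nth]. induction x; [reflexivity|]. cbn [nat_rect]. rewrite IHx, div2_S. reflexivity.
Qed.

Lemma testbit_iter f U : Nat.testbit U f = Nat.odd (Nat.iter f Nat.div2 U).
Proof.
  revert U. induction f; intro U; simpl; auto.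
  rewrite IHf. f_equal. rewrite <- Nat.iter_succ_r. reflexivity.
Qed.

Definition tbT := ap1 parT (Rc (V 1) (V 0) (ap1 div2T (V 1))).
Lemma tbT_ok U f : den [U; f] tbT = Nat.b2n (Nat.testbit U f).
Proof.
  unfold tbT. rewrite den_ap1. rewrite (den_Rc_ext _ _ _ _ U (fun _ acc => Nat.div2 acc)).
  2: reflexivity. 2: intros; dsimp; apply div2T_ok.
  cbn [den nth]. rewrite parT_ok, testbit_iter. reflexivity.
Qed.

Definition nthf w i := cfst (Nat.iter i csnd w).
Definition nthT := ap1 cfstT (Rc (V 1) (V 0) (ap1 csndT (V 1))).
Lemma nthT_ok w i : den [w; i] nthT = nthf w i.
Proof.
  unfold nthT. rewrite den_ap1. rewrite (den_Rc_ext _ _ _ _ w (fun _ acc => csnd acc)).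
  2: reflexivity. 2: intros; dsimp; apply csndT_ok.
  cbn [den nth]. rewrite cfstT_ok. unfold nthf. f_equal.
Qed.

Definition Kf w i := cfst (nthf w i).
Definition Xf w i := cfst (csnd (nthf w i)).
Definition Mf w i := csnd (csnd (nthf w i)).
Definition neqf x y := if x =? y then 0 else 1.

Definition localf w U i :=
  neqf (Xf w i) (pair (Xf w (S i)) (2 ^ pair (Mf w i) 1)) +
  Nat.b2n (Nat.b2n (Nat.testbit U (triple (Kf w i) (Mf w i) (Kf w (S i)))) =? 0).

Definition KT := ap1 cfstT (ap2 nthT (V 0) (V 1)).
Definition XT := ap1 cfstT (ap1 csndT (ap2 nthT (V 0) (V 1))).
Definition MT := ap1 csndT (ap1 csndT (ap2 nthT (V 0) (V 1))).
Definition tripleT := ap2 pairT (V 0) (ap2 pairT (V 1) (V 2)).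

Lemma KT_ok w i : den [w; i] KT = Kf w i.
Proof. unfold KT. dsimp. rewrite nthT_ok, cfstT_ok. reflexivity. Qed.
Lemma XT_ok w i : den [w; i] XT = Xf w i.
Proof. unfold XT. dsimp. rewrite nthT_ok, csndT_ok, cfstT_ok. reflexivity. Qed.
Lemma MT_ok w i : den [w; i] MT = Mf w i.
Proof. unfold MT. dsimp. rewrite nthT_ok, !csndT_ok. reflexivity. Qed.
Lemma tripleT_ok a b c : den [a; b; c] tripleT = triple a b c.
Proof. unfold tripleT. dsimp. rewrite !pairT_ok. reflexivity. Qed.

Definition localT :=
  ap2 addT (ap2 neqT (ap2 XT (V 0) (V 2))
                     (ap2 pairT (ap2 XT (V 0) (Sc (V 2))) (ap1 pow2T (ap2 pairT (ap2 MT (V 0) (V 2)) (Sc Zr)))))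
           (ap1 iszT (ap2 tbT (V 1) (ap3 tripleT (ap2 KT (V 0) (V 2)) (ap2 MT (V 0) (V 2)) (ap2 KT (V 0) (Sc (V 2)))))).

Lemma localT_ok w U i : den [w; U; i] localT = localf w U i.
Proof.
  unfold localT. dsimp. rewrite !XT_ok, !MT_ok, !KT_ok, tripleT_ok, tbT_ok, iszT_ok, !pairT_ok, pow2T_ok,
    neqT_ok, addT_ok. reflexivity.
Qed.

Definition sumloc r w U := nat_rect (fun _ => nat) 0 (fun i acc => acc + localf w U i) r.
Definition sumlocT := Rc (V 0) Zr (ap2 addT (V 1) (ap3 localT (V 3) (V 4) (V 0))).
Lemma sumlocT_ok r w U : den [r; w; U] sumlocT = sumloc r w U.
Proof.
  unfold sumlocT. rewrite (den_Rc_ext _ _ _ _ 0 (fun i acc => acc + localf w U i)).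
  2: reflexivity. 2: intros; dsimp; rewrite localT_ok; apply addT_ok.
  reflexivity.
Qed.

Definition constT k := Nat.iter k Sc Zr.
Lemma constT_ok env k : den env (constT k) = k.
Proof. induction k; simpl; auto. Qed.

Definition hval k z t :=
  let w := csnd z in let r := cfst z in let y := cfst t in let U := csnd t in
  (neqf (Kf w 0) k + neqf (Xf w 0) y) + (sumloc r w U + neqf (Xf w r) (pair (Kf w r) 1)).

Definition hT k :=
  let w := ap1 csndT (V 0) in let r := ap1 cfstT (V 0) in
  let y := ap1 cfstT (V 1) in let U := ap1 csndT (V 1) in
  ap2 addT (ap2 addT (ap2 neqT (ap2 KT w Zr) (constT k)) (ap2 neqT (ap2 XT w Zr) y))
           (ap2 addT (ap3 sumlocT r w U) (ap2 neqT (ap2 XT w r) (ap2 pairT (ap2 KT w r) (Sc Zr)))).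

Lemma hT_ok k z t : den [z; t] (hT k) = hval k z t.
Proof.
  unfold hT. cbv zeta. rewrite !den_ap2, !den_ap3. rewrite constT_ok. cbn [den dens nth].
  rewrite ?den_ap1, ?den_ap2. cbn [den dens nth].
  rewrite !csndT_ok, !cfstT_ok, !KT_ok, !XT_ok, sumlocT_ok, !pairT_ok, !neqT_ok, !addT_ok. reflexivity.
Qed.

Lemma sumloc_zero r w U : sumloc r w U = 0 <-> forall i, i < r -> localf w U i = 0.
Proof.
  induction r; simpl.
  - split; auto; intros; lia.
  - change (nat_rect (fun _ => nat) 0 (fun i acc => acc + localf w U i) r) with (sumloc r w U).
    split.
    + intros H i Hi. assert (sumloc r w U = 0) by lia. destruct (Nat.eq_dec i r) as [->|Hne]; [lia|]. apply IHr; auto; lia.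
    + intros H. rewrite (proj2 IHr) by (intros; apply H; lia). rewrite H by lia. reflexivity.
Qed.

Lemma neqf_zero x y : neqf x y = 0 <-> x = y.
Proof. unfold neqf. destruct (Nat.eqb_spec x y); split; intros; lia. Qed.

Lemma localf_zero w U i : localf w U i = 0 <->
  Xf w i = pair (Xf w (S i)) (2 ^ pair (Mf w i) 1) /\
  Nat.testbit U (triple (Kf w i) (Mf w i) (Kf w (S i))) = true.
Proof.
  unfold localf. rewrite <- (neqf_zero (Xf w i)).
  destruct (Nat.testbit U _); simpl.
  - split; intros; [split; auto; lia | lia].
  - split; intros H; [lia | destruct H; discriminate].
Qed.

Lemma hval_zero k z t : hval k z t = 0 <->
  let w := csnd z in let r := cfst z in
  Kf w 0 = k /\ Xf w 0 = cfst t /\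
  (forall i, i < r -> Xf w i = pair (Xf w (S i)) (2 ^ pair (Mf w i) 1) /\
     Nat.testbit (csnd t) (triple (Kf w i) (Mf w i) (Kf w (S i))) = true) /\
  Xf w (cfst z) = pair (Kf w (cfst z)) 1.
Proof.
  unfold hval. simpl.
  split.
  - intro H. assert (Hs : sumloc (cfst z) (csnd z) (csnd t) = 0) by lia.
    rewrite sumloc_zero in Hs.
    split; [apply neqf_zero; lia|]. split; [apply neqf_zero; lia|].
    split; [intros i Hi; apply localf_zero; auto | apply neqf_zero; lia].
  - intros [H1 [H2 [H3 H4]]].
    apply neqf_zero in H1. apply neqf_zero in H2. apply neqf_zero in H4.
    rewrite H1, H2, H4. rewrite (proj2 (sumloc_zero _ _ _)). reflexivity.
    intros i Hi. apply localf_zero. auto.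
Qed.

Inductive Fk (X : nat -> Prop) : nat -> nat -> Prop :=
| Ftok : forall k, Fk X k (pair k 1)
| Fstep : forall k m c x, X (triple k m c) -> Fk X c x -> Fk X k (pair x (2 ^ pair m 1)).

Definition Ek k : nat -> Prop := fun t => exists z, den [z; t] (hT k) = 0.

Lemma Ek_ce k : ce (Ek k).
Proof. apply ce_mu. Qed.

Lemma nthf_S e w i : nthf (pair e w) (S i) = nthf w i.
Proof. unfold nthf. rewrite Nat.iter_succ_r, csnd_pair. reflexivity. Qed.
Lemma nthf_0' e w : nthf (pair e w) 0 = e.
Proof. unfold nthf. simpl. rewrite cfst_pair. reflexivity. Qed.

Lemma fin_code (Fs : list nat) : exists U, forall x, Nat.testbit U x = true <-> In x Fs.
Proof.
  induction Fs as [|a Fs [U HU]].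
  - exists 0. intro x. rewrite Nat.bits_0. simpl. split; intro H; [discriminate|contradiction].
  - exists (Nat.lor (2 ^ a) U). intro x. rewrite Nat.lor_spec, Nat.pow2_bits_eqb, Bool.orb_true_iff, HU.
    simpl. rewrite Nat.eqb_eq. split; intros [H|H]; auto.
Qed.

Lemma Fk_good X k y : Fk X k y -> exists r w Fs, (forall f, In f Fs -> X f) /\
  Kf w 0 = k /\ Xf w 0 = y /\
  (forall i, i < r -> Xf w i = pair (Xf w (S i)) (2 ^ pair (Mf w i) 1) /\
     In (triple (Kf w i) (Mf w i) (Kf w (S i))) Fs) /\
  Xf w r = pair (Kf w r) 1.
Proof.
  induction 1 as [k|k m c x HX HF IH].
  - exists 0, (pair (pair k (pair (pair k 1) 0)) 0), [].
    unfold Kf, Xf. rewrite nthf_0', !cfst_pair, csnd_pair, cfst_pair.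
    repeat split; auto; try (simpl; tauto); intros; lia.
  - destruct IH as [r [w [Fs [HFs [H0 [H1 [H2 H3]]]]]]].
    exists (S r), (pair (pair k (pair (pair x (2 ^ pair m 1)) m)) w), (triple k m c :: Fs).
    unfold Kf, Xf, Mf in *. rewrite nthf_0', !cfst_pair, !csnd_pair, !cfst_pair.
    split; [simpl; intros f [<-|Hf]; auto|].
    split; [auto|]. split; [auto|]. split.
    + intros i Hi. destruct i as [|i].
      * rewrite nthf_S, nthf_0', !csnd_pair, !cfst_pair, H1, H0. split; [reflexivity|left; reflexivity].
      * rewrite !nthf_S. destruct (H2 i ltac:(lia)) as [A B]. split; auto. right; auto.
    + rewrite !nthf_S. auto.
Qed.

Lemma Fk_Gapp X k : set_eq (Fk X k) (Gapp (Ek k) X).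
Proof.
  intro y. split.
  - intro HF. destruct (Fk_good X k y HF) as [r [w [Fs [HFs [H0 [H1 [H2 H3]]]]]]].
    destruct (fin_code Fs) as [U HU].
    exists U. split.
    + exists (pair r w). rewrite hT_ok. apply hval_zero. simpl.
      rewrite !cfst_pair, !csnd_pair. split; [auto|]. split; [auto|]. split; [|auto].
      intros i Hi. destruct (H2 i Hi) as [A B]. split; auto. apply HU; auto.
    + intros x Hx. apply HFs. apply HU. exact Hx.
  - intros [u [[z Hz] HD]]. rewrite hT_ok in Hz. apply hval_zero in Hz. simpl in Hz.
    rewrite cfst_pair, csnd_pair in Hz.
    destruct Hz as [H0 [H1 [H2 H3]]].
    set (w := csnd z) in *. set (r := cfst z) in *.
    assert (G : forall d i, i + d = r -> Fk X (Kf w i) (Xf w i)).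
    { induction d; intros i Hi.
      - replace i with r by lia. rewrite H3. constructor.
      - destruct (H2 i ltac:(lia)) as [A B]. rewrite A. econstructor.
        + apply HD. unfold D. exact B.
        + apply IHd. lia. }
    rewrite <- H1, <- H0. apply (G r 0). lia.
Qed.

Definition Xof {A : Type} (app : A -> A -> option A) (gamma : nat -> option A) : nat -> Prop :=
  fun t => exists n m k a b c,
      t = triple n m k /\ gamma n = Some a /\ gamma m = Some b /\
      gamma k = Some c /\ app a b = Some c.

Lemma Xtri {A : Type} (app : A -> A -> option A) gamma k m c :
  Xof app gamma (triple k m c) <-> exists a b d, gamma k = Some a /\ gamma m = Some b /\
     gamma c = Some d /\ app a b = Some d.
Proof.
  split.
  - intros [n [m' [k' [a [b [d [E [H1 [H2 [H3 H4]]]]]]]]]].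
    unfold triple in E. apply pair_inj in E. destruct E as [<- E]. apply pair_inj in E. destruct E as [<- <-].
    exists a, b, d; auto.
  - intros [a [b [d [H1 [H2 [H3 H4]]]]]]. exists k, m, c, a, b, d. auto.
Qed.

Lemma Fk_inv X c y : Fk X c y -> y = pair c 1 \/
  exists m c' x, y = pair x (2 ^ pair m 1) /\ X (triple c m c') /\ Fk X c' x.
Proof. destruct 1; [left; auto | right; eauto 7]. Qed.

Lemma pow2_pair_ge2 m : 2 <= 2 ^ pair m 1.
Proof.
  pose proof (pair_ge_r m 1). destruct (pair m 1) as [|p]; [lia|].
  rewrite Nat.pow_succ_r'. pose proof (Nat.pow_nonzero 2 p ltac:(lia)). lia.
Qed.

Lemma tok_inv X c k : Fk X c (pair k 1) -> c = k.
Proof.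
  intro H. apply Fk_inv in H. destruct H as [E|[m [c' [x [E _]]]]].
  - apply pair_inj in E. destruct E; auto.
  - apply pair_inj in E. destruct E as [_ E]. pose proof (pow2_pair_ge2 m). lia.
Qed.

Lemma no_zero X c : ~ Fk X c 0.
Proof.
  intro H. apply Fk_inv in H. destruct H as [E|[m [c' [x [E _]]]]].
  - pose proof (pair_ge_r c 1). lia.
  - pose proof (pair_ge_r x (2 ^ pair m 1)). pose proof (pow2_pair_ge2 m). lia.
Qed.

Lemma D_1_0 : D 1 0.
Proof. reflexivity. Qed.
Lemma D_pow2 p x : D (2 ^ p) x <-> x = p.
Proof. unfold D. rewrite Nat.pow2_bits_eqb, Nat.eqb_eq. split; auto. Qed.

Lemma pca_I A app : is_pca A app -> exists I, forall x, app I x = Some x.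
Proof.
  intros [s [k [_ [H1 [H2 H3]]]]].
  specialize (H2 k k). destruct (app s k) as [p|] eqn:E1; simpl in H2; [|contradiction].
  destruct (app p k) as [I|] eqn:E2; [|contradiction].
  exists I. intro x. specialize (H3 k k x). rewrite E1 in H3. simpl in H3. rewrite E2 in H3. simpl in H3.
  rewrite H3. destruct (app k x) as [q|] eqn:E3.
  - simpl. specialize (H1 x q). rewrite E3 in H1. simpl in H1. exact H1.
  - specialize (H1 x x). rewrite E3 in H1. discriminate.
Qed.

Theorem theorem7p1 (A : Type) (app : A -> A -> option A)
  (gamma : nat -> option A) :
  is_pca A app ->
  partial_numbering gamma ->
  let X : nat -> Prop := fun t => exists n m k a b c,
      t = triple n m k /\ gamma n = Some a /\ gamma m = Some b /\
      gamma k = Some c /\ app a b = Some c in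
  (exists f : A -> nat -> Prop,
      G_embedding app f /\ (forall a, GX X (f a))) /\
  (exists f : A -> nat -> Prop, G_embedding app f).
Proof.
  intros Hpca Hnum X.
  assert (HX : forall k m c, X (triple k m c) <-> exists a b d, gamma k = Some a /\ gamma m = Some b /\
     gamma c = Some d /\ app a b = Some d) by (intros; exact (Xtri app gamma k m c)).
  destruct (pca_I A app Hpca) as [I HI].
  set (f := fun a y => exists c, gamma c = Some a /\ Fk X c y).
  assert (Emb : G_embedding app f).
  { split.
    - intros a b Heq. destruct (Hnum a) as [n Hn].
      assert (Hfa : f a (pair n 1)) by (exists n; split; auto; constructor).
      apply Heq in Hfa. destruct Hfa as [c [Hc HF]]. apply tok_inv in HF. subst c. congruence.
    - intros a b d Hab y. split.
      + intros [u [[c [Hc HF]] HD]]. apply Fk_inv in HF.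
        destruct HF as [E|[m [c' [x [E [HXt HF]]]]]].
        * apply pair_inj in E. destruct E as [_ ->]. destruct (HD 0 D_1_0) as [c2 [_ H0]].
          exfalso; eapply no_zero; eauto.
        * apply pair_inj in E. destruct E as [-> ->].
          destruct (HD (pair m 1) (proj2 (D_pow2 _ _) eq_refl)) as [c2 [Hc2 Ht]].
          apply tok_inv in Ht. subst c2.
          apply HX in HXt. destruct HXt as [a1 [b1 [d1 [E1 [E2 [E3 E4]]]]]].
          rewrite Hc in E1. rewrite Hc2 in E2. injection E1 as <-. injection E2 as <-.
          rewrite Hab in E4. injection E4 as <-. exists c'. auto.
      + intros [c' [Hc' HF]]. destruct (Hnum a) as [ca Hca]. destruct (Hnum b) as [m Hm].
        exists (2 ^ pair m 1). split.
        * exists ca. split; auto. econstructor; [|exact HF]. apply HX. exists a, b, d. auto.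
        * intros x Hx. apply D_pow2 in Hx. subst x. exists m. split; auto. constructor. }
  assert (Fgx : forall k, GX X (Fk X k)).
  { intro k. apply (GX_app X (Ek k) X).
    - apply GX_ce. apply Ek_ce.
    - apply GX_X. intro; tauto.
    - apply Fk_Gapp. }
  assert (Main : exists f : A -> nat -> Prop, G_embedding app f /\ (forall a, GX X (f a))).
  { exists f. split; auto. intro a.
    destruct (Hnum a) as [n Hn]. destruct (Hnum I) as [iI HiI].
    apply (GX_app X (Fk X iI) (Fk X n)); auto.
    intro y. split.
    - intros [c [Hc HF]]. exists (2 ^ pair n 1). split.
      + econstructor; [|exact HF]. apply HX. exists I, a, a. auto.
      + intros x Hx. apply D_pow2 in Hx. subst x. constructor.
    - intros [u [HF HD]]. apply Fk_inv in HF.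
      destruct HF as [E|[m [c' [x [E [HXt HF]]]]]].
      + apply pair_inj in E. destruct E as [_ ->]. exfalso. eapply no_zero. apply (HD 0 D_1_0).
      + apply pair_inj in E. destruct E as [-> ->].
        pose proof (HD (pair m 1) (proj2 (D_pow2 _ _) eq_refl)) as Ht.
        apply tok_inv in Ht. subst m.
        apply HX in HXt. destruct HXt as [a1 [b1 [d1 [E1 [E2 [E3 E4]]]]]].
        rewrite HiI in E1. rewrite Hn in E2. injection E1 as <-. injection E2 as <-.
        rewrite HI in E4. injection E4 as <-. exists c'. auto. }
  split; auto. destruct Main as [g [Hg _]]. exists g; auto.
Qed.
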